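(* Let $H$ be a complex Hilbert space and $\{\mathcal{U}(t)\}_{t\geq 0}$ a strongly continuous semigroup on $H$ with generator $\mathcal{L}$. Let $z\in D(\mathcal{L})\cap D(\mathcal{L}^\dagger)$ with $z\neq0$, $\mathcal{P}:=(\cdot,z)(z,z)^{-1}z$, $\mathcal{Q}:=1-\mathcal{P}$. Let $K:\mathbb{R}_+\to\mathbb{C}$ be the unique continuous solution of $$K(t)=(\mathcal{U}(t)\mathcal{QL}z,\mathcal{Q}\mathcal{L}^\dagger z)(z,z)^{-1}-\int_0^tK(t-s)\,(\mathcal{U}(s)z,\mathcal{Q}\mathcal{L}^\dagger z)(z,z)^{-1}\,ds,$$ and let $\eta_t:=\mathcal{U}(t)\mathcal{QL}z-\int_0^tK(t-s)\,\mathcal{U}(s)z\,ds$. Then $(\eta_t,z)=0$ for all $t\ge0$.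
   Context: The scalar product $(\cdot,\cdot)$ on $H$ is conjugate-linear in its second argument. The generator is $\mathcal{L}x:=\lim_{h\searrow 0}\frac1h[\mathcal{U}(h)x-x]$ on the set $D(\mathcal{L})$ where the limit exists; $\dagger$ denotes the adjoint. Vector-valued integrals are Bochner integrals. *)

(* Defs.v *)
From HB Require Import structures.
From mathcomp Require Import all_boot all_order all_algebra.
From mathcomp Require Import reals.
From mathcomp Require Import complex.

Set Implicit Arguments.
Unset Strict Implicit.
Unset Printing Implicit Defensive.

Import Order.TTheory GRing.Theory Num.Theory.
Local Open Scope ring_scope.
Local Open Scope complex_scope.

Section Defs.
Variable R : realType.
Local Notation C := R[i].

Definition cnorm (c : C) : R := Num.sqrt (complex.Re c ^+ 2 + complex.Im c ^+ 2).

Variable V : lmodType C.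
Variable ip : V -> V -> C.   (* scalar product, conjugate-linear in 2nd arg *)

Definition hnorm (x : V) : R := Num.sqrt (complex.Re (ip x x)).

Definition is_hilbert : Prop :=
  [/\ (forall a x y z, ip (a *: x + y) z = a * ip x z + ip y z),
      (forall x y, ip y x = conjc (ip x y)),
      (forall x, 0 <= complex.Re (ip x x)),
      (forall x, ip x x = 0 -> x = 0) &
      (forall u : nat -> V,
         (forall e : R, 0 < e -> exists N : nat, forall m n : nat,
             (N <= m)%N -> (N <= n)%N -> hnorm (u m - u n) < e) ->
         exists l : V, forall e : R, 0 < e -> exists N : nat, forall n : nat,
             (N <= n)%N -> hnorm (u n - l) < e)].

(* {U t}_{t>=0} is a strongly continuous semigroup of bounded linear operators
   (values of U at t < 0 are irrelevant) *)
Definition is_C0_semigroup (U : R -> V -> V) : Prop :=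
  [/\ (forall t, 0 <= t -> forall a x y, U t (a *: x + y) = a *: U t x + U t y),
      (forall t, 0 <= t -> exists M : R, forall x, hnorm (U t x) <= M * hnorm x),
      (forall x, U 0 x = x),
      (forall s t, 0 <= s -> 0 <= t -> forall x, U (s + t) x = U s (U t x)) &
      (forall x, forall e : R, 0 < e -> exists d : R, 0 < d /\
          forall h : R, 0 <= h -> h < d -> hnorm (U h x - x) < e)].

(* x \in D(L) and L x = y, where L is the generator:
   L x = lim_{h -> 0+} (U h x - x)/h *)
Definition is_gen (U : R -> V -> V) (x y : V) : Prop :=
  forall e : R, 0 < e -> exists d : R, 0 < d /\
    forall h : R, 0 < h -> h < d -> hnorm ((h^-1)%:C *: (U h x - x) - y) < e.

(* z \in D(L^dagger) and L^dagger z = w:  (L x, z) = (x, w) for all x in D(L) *)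
Definition is_adj_gen (U : R -> V -> V) (z w : V) : Prop :=
  forall x y, is_gen U x y -> ip y z = ip x w.

Definition projP (z v : V) : V := (ip v z / ip z z) *: z.
Definition projQ (z v : V) : V := v - projP z v.

(* Riemann-sum definition of the integral over [0, t] (for continuous
   integrands it agrees with the Bochner/Lebesgue integral). *)
Definition is_tagged_partition (t d : R) (n : nat) (p xi : nat -> R) : Prop :=
  [/\ p 0%N = 0, p n = t &
      forall i : nat, (i < n)%N ->
        [/\ p i <= xi i, xi i <= p i.+1 & p i.+1 - p i < d]].

Definition is_vint (g : R -> V) (t : R) (v : V) : Prop :=
  forall e : R, 0 < e -> exists d : R, 0 < d /\
    forall (n : nat) (p xi : nat -> R), is_tagged_partition t d n p xi ->
      hnorm (\sum_(i < n) ((p i.+1 - p i)%:C *: g (xi i)) - v) < e.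

End Defs.

Definition is_cint (R : realType) (g : R -> R[i]) (t : R) (v : R[i]) : Prop :=
  forall e : R, 0 < e -> exists d : R, 0 < d /\
    forall (n : nat) (p xi : nat -> R), is_tagged_partition t d n p xi ->
      cnorm (\sum_(i < n) ((p i.+1 - p i)%:C * g (xi i)) - v) < e.

Definition ccont_nonneg (R : realType) (K : R -> R[i]) : Prop :=
  forall t, 0 <= t -> forall e : R, 0 < e -> exists d : R, 0 < d /\
    forall s, 0 <= s -> `|s - t| < d -> cnorm (K s - K t) < e.

(* Main.v *)
Require Import Defs.
From HB Require Import structures.
From mathcomp Require Import all_boot all_order all_algebra.
From mathcomp Require Import reals complex.
From mathcomp Require Import boolp classical_sets.
From mathcomp Require Import ring lra.
From Stdlib Require Import Classical.
Import Order.TTheory GRing.Theory Num.Theory.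
Local Open Scope ring_scope.
Local Open Scope complex_scope.

Set Implicit Arguments.
Unset Strict Implicit.
Unset Printing Implicit Defensive.


Lemma sub3 (V : zmodType) (a b c : V) : a - b = (c - b) - (c - a).
Proof. by rewrite opprB [RHS]addrC addrA subrK. Qed.
Lemma subKK (V : zmodType) (a c : V) : a = c - (c - a).
Proof. by rewrite opprB [RHS]addrC subrK. Qed.

Section CN.
Variable R : realType.
Local Notation C := R[i].
Implicit Types (a b c : C) (r s : R).

Lemma cnormE c : `|c| = (cnorm c)%:C.
Proof. by rewrite normc_def. Qed.

Lemma cnorm_ge0 c : 0 <= cnorm c.
Proof. by have := normr_ge0 c; rewrite cnormE lecR. Qed.

Lemma cnormD a b : cnorm (a + b) <= cnorm a + cnorm b.
Proof. by rewrite -lecR rmorphD /= -!cnormE ler_normD. Qed.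

Lemma cnormM a b : cnorm (a * b) = cnorm a * cnorm b.
Proof. by apply: complexI; rewrite rmorphM /= -!cnormE normrM. Qed.

Lemma cnormN a : cnorm (- a) = cnorm a.
Proof. by apply: complexI; rewrite -!cnormE normrN. Qed.

Lemma cnorm0 : cnorm (0 : C) = 0.
Proof. by apply: complexI; rewrite -!cnormE normr0. Qed.

Lemma cnorm_eq0 a : cnorm a = 0 -> a = 0.
Proof. by move=> h; apply/normr0_eq0; rewrite cnormE h. Qed.

Lemma cnormR r : cnorm r%:C = `|r|.
Proof. by rewrite /cnorm /= expr0n /= addr0 sqrtr_sqr. Qed.

Lemma cnormB a b : cnorm (a - b) = cnorm (b - a).
Proof. by rewrite -cnormN opprB. Qed.

Lemma cnormB_le a b : cnorm a - cnorm b <= cnorm (a - b).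
Proof. by rewrite lerBlDr; apply: le_trans (cnormD _ _); rewrite subrK. Qed.

Lemma cnorm_sum (I : Type) (s : seq I) (P : pred I) (F : I -> C) :
  cnorm (\sum_(i <- s | P i) F i) <= \sum_(i <- s | P i) cnorm (F i).
Proof.
elim/big_rec2: _; first by rewrite cnorm0.
by move=> i y1 y2 _ h; apply: le_trans (cnormD _ _) _; rewrite lerD2l.
Qed.

Lemma Re_le_cnorm c : complex.Re c <= cnorm c.
Proof.
rewrite /cnorm; apply: le_trans (ler_norm _) _.
rewrite -sqrtr_sqr; apply: ler_wsqrtr; rewrite lerDl sqr_ge0 //.
Qed.

End CN.


Section HB.
Variable R : realType.
Local Notation C := R[i].
Variable V : lmodType C.
Variable ip : V -> V -> C.
Hypothesis Hh : is_hilbert ip.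
Local Notation hn := (hnorm ip).

Lemma ipZDl a x y z : ip (a *: x + y) z = a * ip x z + ip y z.
Proof. by case: Hh. Qed.
Lemma ipC x y : ip y x = conjc (ip x y).
Proof. by case: Hh. Qed.
Lemma ipDl x y z : ip (x + y) z = ip x z + ip y z.
Proof. by rewrite -[x]scale1r ipZDl mul1r scale1r. Qed.
Lemma ip0l z : ip 0 z = 0.
Proof. by apply: (addrI (ip 0 z)); rewrite -ipDl !addr0. Qed.
Lemma ipZl a x z : ip (a *: x) z = a * ip x z.
Proof. by rewrite -[a *: x]addr0 ipZDl ip0l addr0. Qed.
Lemma ipNl x z : ip (- x) z = - ip x z.
Proof. by rewrite -scaleN1r ipZl mulN1r. Qed.
Lemma ipBl x y z : ip (x - y) z = ip x z - ip y z.
Proof. by rewrite ipDl ipNl. Qed.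
Lemma ipDr x y z : ip z (x + y) = ip z x + ip z y.
Proof. by rewrite ipC ipDl rmorphD /= -!ipC. Qed.
Lemma ipZr a x z : ip z (a *: x) = conjc a * ip z x.
Proof. by rewrite ipC ipZl rmorphM /= -ipC. Qed.
Lemma ip0r z : ip z 0 = 0.
Proof. by rewrite ipC ip0l conjc0. Qed.
Lemma ipNr x z : ip z (- x) = - ip z x.
Proof. by rewrite -scaleN1r ipZr rmorphN1 mulN1r. Qed.
Lemma ipBr x y z : ip z (x - y) = ip z x - ip z y.
Proof. by rewrite ipDr ipNr. Qed.
Lemma ip_suml (I : Type) (s : seq I) (P : pred I) (F : I -> V) z :
  ip (\sum_(i <- s | P i) F i) z = \sum_(i <- s | P i) ip (F i) z.
Proof.
elim/big_rec2: _; first by rewrite ip0l.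
by move=> i y1 y2 _ <-; rewrite ipDl.
Qed.

Lemma hn_ge0 x : 0 <= hn x.
Proof. exact: sqrtr_ge0. Qed.

Lemma ip_self x : ip x x = (hn x ^+ 2)%:C.
Proof.
have hre : 0 <= complex.Re (ip x x) by case: Hh.
rewrite /hnorm sqr_sqrtr //.
have hc := ipC x x.
move: hc; case: (ip x x) => a b /= [] hb.
have h2 : b *+ 2 = 0 by rewrite mulr2n {1}hb addNr.
have -> : b = 0 by move/eqP: h2; rewrite mulrn_eq0 => /eqP.
by [].
Qed.

Lemma hn_eq0 x : hn x = 0 -> x = 0.
Proof. by move=> h; case: Hh => _ _ _ H _; apply: H; rewrite ip_self h expr0n. Qed.

Lemma hn0 : hn 0 = 0.
Proof. by rewrite /hnorm ip0l /= sqrtr0. Qed.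

Lemma hnZ a x : hn (a *: x) = cnorm a * hn x.
Proof.
have h : (hn (a *: x) ^+ 2)%:C = ((cnorm a * hn x) ^+ 2)%:C.
  rewrite -ip_self ipZl ipZr ip_self mulrA -sqr_normc cnormE.
  by rewrite -!rmorphXn -rmorphM exprMn.
case: h => /eqP; rewrite eqf_sqr => /orP[/eqP //|/eqP h].
have h3 : 0 <= cnorm a * hn x by rewrite mulr_ge0 // ?cnorm_ge0 ?hn_ge0.
have h4 := hn_ge0 (a *: x); rewrite h oppr_ge0 in h4.
have e0 : cnorm a * hn x = 0 by apply/eqP; rewrite eq_le h4 h3.
by rewrite h e0 oppr0.
Qed.

Lemma hnN x : hn (- x) = hn x.
Proof. by rewrite -scaleN1r hnZ cnormN (_ : 1 = 1%:C) // cnormR normr1 mul1r. Qed.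

Lemma hnB x y : hn (x - y) = hn (y - x).
Proof. by rewrite -hnN opprB. Qed.

Lemma ip_expand x y a :
  ip (x - a *: y) (x - a *: y) =
  ip x x - conjc a * ip x y - a * ip y x + a * conjc a * ip y y.
Proof. rewrite !ipBl !ipBr !ipZl !ipZr; ring. Qed.

Lemma CS x y : cnorm (ip x y) <= hn x * hn y.
Proof.
have [->|y0] := eqVneq y 0; first by rewrite ip0r cnorm0 hn0 mulr0.
have ny : hn y != 0 by apply: contra y0 => /eqP /hn_eq0 ->.
set c := ip x y; set N := ip y y.
have NE : N = (hn y ^+ 2)%:C by rewrite /N ip_self.
have N0 : N != 0.
  rewrite NE; apply: contra ny => /eqP /(congr1 (@complex.Re R)) /= /eqP.
  by rewrite sqrf_eq0.
have key : ip (x - (c / N) *: y) (x - (c / N) *: y) = ip x x - c * conjc c / N.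
  rewrite ip_expand -/c -/N (ipC x y) -/c.
  have -> : conjc (c / N) = conjc c / N.
    by rewrite rmorphM /= conjc_inv NE conjc_real.
  by field.
have h1 : 0 <= ip x x - c * conjc c / N.
  by rewrite -key ip_self lecR sqr_ge0.
have h2 : c * conjc c <= ip x x * N.
  rewrite -subr_ge0.
  have Npos : 0 < N by rewrite lt_def N0 NE lecR sqr_ge0.
  have -> : ip x x * N - c * conjc c = N * (ip x x - c * conjc c / N) by field.
  by rewrite mulr_ge0 // ltW.
move: h2; rewrite -sqr_normc cnormE NE ip_self -!rmorphXn -rmorphM lecR -exprMn => h2.
rewrite -(ger0_norm (cnorm_ge0 c)) -sqrtr_sqr.
rewrite -(ger0_norm (mulr_ge0 (hn_ge0 x) (hn_ge0 y))) -[X in _ <= X]sqrtr_sqr.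
exact: ler_wsqrtr.
Qed.

Lemma hnD x y : hn (x + y) <= hn x + hn y.
Proof.
have h : hn (x + y) ^+ 2 <= (hn x + hn y) ^+ 2.
  have e : (hn (x + y) ^+ 2)%:C = (hn x ^+ 2 + hn y ^+ 2)%:C + (ip x y + conjc (ip x y)).
    by rewrite -ip_self ipDl !ipDr !ip_self (ipC x y) rmorphD /=; ring.
  have e2 : (hn (x + y) ^+ 2) = hn x ^+ 2 + hn y ^+ 2 + complex.Re (ip x y) *+ 2.
    move: e; rewrite addcJ mulr_natl -rmorphMn -rmorphD => e.
    by case: e.
  rewrite e2 sqrrD [in X in _ <= X]addrAC lerD2l lerMn2r /=.
  by apply: le_trans (Re_le_cnorm _) (CS _ _).
rewrite -(ger0_norm (hn_ge0 (x + y))) -sqrtr_sqr.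
rewrite -(ger0_norm (addr_ge0 (hn_ge0 x) (hn_ge0 y))) -[X in _ <= X]sqrtr_sqr.
exact: ler_wsqrtr.
Qed.

Lemma hnB_le x y : hn x - hn y <= hn (x - y).
Proof. by rewrite lerBlDr; apply: le_trans (hnD _ _); rewrite subrK. Qed.

Lemma ip_cont x y z : cnorm (ip x z - ip y z) <= hn (x - y) * hn z.
Proof. by rewrite -ipBl CS. Qed.

End HB.


Lemma archi_nat (R : realType) (x : R) : exists n : nat, x < n%:R.
Proof.
exists (Num.Def.archi_bound (Num.max x 0)).
apply: le_lt_trans (archi_boundP _); first by rewrite le_max lexx.
by rewrite le_max lexx orbT.
Qed.

Lemma cnorm_nat (R : realType) (n : nat) : cnorm (n%:R : R[i]) = n%:R.
Proof. by rewrite -(rmorph_nat (real_complex R)) cnormR ger0_norm. Qed.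

Section SG.
Variable R : realType.
Local Notation C := R[i].
Variable V : lmodType C.
Variable ip : V -> V -> C.
Hypothesis Hh : is_hilbert ip.
Local Notation hn := (hnorm ip).
Variable U : R -> V -> V.
Hypothesis HU : is_C0_semigroup ip U.

Lemma U_lin t a x y : 0 <= t -> U t (a *: x + y) = a *: U t x + U t y.
Proof. by case: HU => H _ _ _ _ t0; apply: H. Qed.
Lemma UD t x y : 0 <= t -> U t (x + y) = U t x + U t y.
Proof. by move=> t0; rewrite -[x]scale1r U_lin // !scale1r. Qed.
Lemma U0 t : 0 <= t -> U t 0 = 0.
Proof. by move=> t0; apply: (addrI (U t 0)); rewrite -UD // !addr0. Qed.
Lemma UZ t a x : 0 <= t -> U t (a *: x) = a *: U t x.
Proof. by move=> t0; rewrite -[a *: x]addr0 U_lin // U0 // addr0. Qed.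
Lemma UN t x : 0 <= t -> U t (- x) = - U t x.
Proof. by move=> t0; rewrite -scaleN1r UZ // scaleN1r. Qed.
Lemma UB t x y : 0 <= t -> U t (x - y) = U t x - U t y.
Proof. by move=> t0; rewrite UD // UN. Qed.
Lemma U_0 x : U 0 x = x.
Proof. by case: HU => _ _ H _ _; apply: H. Qed.
Lemma U_semi s t x : 0 <= s -> 0 <= t -> U (s + t) x = U s (U t x).
Proof. by case: HU => _ _ _ H _ s0 t0; apply: H. Qed.
Lemma U_bd t : 0 <= t -> exists M : R, forall x, hn (U t x) <= M * hn x.
Proof. by case: HU => _ H _ _ _; apply: H. Qed.
Lemma U_sc x e : 0 < e -> exists d : R, 0 < d /\
          forall h : R, 0 <= h -> h < d -> hn (U h x - x) < e.
Proof. by case: HU => _ _ _ _ H; apply: H. Qed.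

Definition onS t : set R := [set r : R | exists x, hn x <= 1 /\ r = hn (U t x)]%classic.
Definition on t := sup (onS t).

Lemma on_has_sup t : 0 <= t -> has_sup (onS t).
Proof.
move=> t0; split; first by exists (hn (U t 0)), 0; rewrite (hn0 Hh).
have [M HM] := U_bd t0; exists `|M| => r [x [x1 ->]].
apply: le_trans (HM x) _; apply: le_trans (_ : `|M| * hn x <= _).
  by apply: ler_wpM2r; [exact: hn_ge0 | exact: ler_norm].
by rewrite -[X in _ <= X]mulr1; apply: ler_wpM2l.
Qed.

Lemma on_ub t x : 0 <= t -> hn x <= 1 -> hn (U t x) <= on t.
Proof. by move=> t0 x1; apply: sup_upper_bound (on_has_sup t0) _ _; exists x. Qed.

Lemma on_ge0 t : 0 <= t -> 0 <= on t.
Proof. move=> t0; have h := on_ub (x:=0) t0; rewrite U0 // (hn0 Hh) in h; exact: h ler01. Qed.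

Lemma on_bound t x : 0 <= t -> hn (U t x) <= on t * hn x.
Proof.
move=> t0; have [x0|x0] := eqVneq (hn x) 0.
  by rewrite (hn_eq0 Hh x0) U0 // (hn0 Hh) mulr0.
have xp : 0 < hn x by rewrite lt_def x0 hn_ge0.
set u := ((hn x)^-1)%:C *: x.
have hu : hn u = 1 by rewrite /u (hnZ Hh) cnormR ger0_norm ?invr_ge0 ?hn_ge0 // mulVf.
have := on_ub (x:=u) t0; rewrite hu lexx => /(_ isT).
rewrite /u UZ // (hnZ Hh) cnormR ger0_norm ?invr_ge0 ?hn_ge0 //.
by rewrite mulrC -ler_pdivrMr.
Qed.

Lemma on_adh t : 0 <= t -> 0 < on t ->
  exists u, hn u <= 1 /\ 2 / 3 * on t < hn (U t u).
Proof.
move=> t0 op.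
have op3 : 0 < on t / 3 by rewrite divr_gt0.
have [e [u [u1 ->]] He] := sup_adherent op3 (on_has_sup t0).
exists u; split => //; apply: le_lt_trans He; rewrite -/(on t); lra.
Qed.

Lemma hn_twice v : hn (v + v) = hn v *+ 2.
Proof. by rewrite -mulr2n -scaler_nat (hnZ Hh) cnorm_nat mulr_natl. Qed.

Lemma sokal t x r : 0 <= t -> 0 < r ->
  exists x', hn (x' - x) <= r /\ 2 / 3 * r * on t <= hn (U t x').
Proof.
move=> t0 r0; have [op|] := ltP 0 (on t); last first.
  move=> o0; exists x; rewrite subrr (hn0 Hh) ltW //; split => //.
  apply: le_trans (hn_ge0 _ _); rewrite pmulr_rle0 ?o0 //; lra.
have [u [u1 hu]] := on_adh t0 op.
set xi := r%:C *: u.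
have hxi : hn xi <= r.
  by rewrite (hnZ Hh) cnormR (ger0_norm (ltW r0)) -[X in _ <= X]mulr1 (ler_wpM2l (ltW r0) u1).
have hUxi : 2 / 3 * r * on t <= hn (U t xi).
  rewrite UZ // (hnZ Hh) cnormR (ger0_norm (ltW r0)) mulrAC [X in _ <= X]mulrC ler_pM2r //.
  exact: ltW hu.
have sum : hn (U t xi) *+ 2 <= hn (U t (x + xi)) + hn (U t (x - xi)).
  rewrite -hn_twice (_ : U t xi + U t xi = U t (x + xi) - U t (x - xi)).
    by have := hnD Hh (U t (x + xi)) (- U t (x - xi)); rewrite (hnN Hh).
  by rewrite UB // UD // opprB [in RHS]addrC [in RHS]addrA subrK.
have [h1|h1] := leP (hn (U t xi)) (hn (U t (x + xi))).
  exists (x + xi); rewrite addrAC subrr add0r; split => //; exact: le_trans h1.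
exists (x - xi); rewrite addrAC subrr add0r (hnN Hh); split => //.
apply: le_trans hUxi _; move: sum; rewrite mulr2n; lra.
Qed.

Lemma U_locbound0 : exists d M : R, 0 < d /\
  forall t, 0 <= t -> t <= d -> forall x, hn (U t x) <= M * hn x.
Proof.
apply: NNPP => NB.
have H1 : forall k : nat, exists t, (0 <= t /\ t <= (k.+1%:R)^-1) /\
    6 * 3 ^+ k * k.+1%:R < on t.
  move=> k; apply: NNPP => hk; apply: NB.
  exists (k.+1%:R^-1), (6 * 3 ^+ k * k.+1%:R); split; first by rewrite invr_gt0 ltr0Sn.
  move=> t t0 t1 x.
  apply: le_trans (on_bound x t0) _; apply: ler_wpM2r; first exact: hn_ge0.
  by rewrite leNgt; apply/negP => h; apply: hk; exists t.
pose tk k := proj1_sig (cid (H1 k)).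
have tkP k : (0 <= tk k /\ tk k <= (k.+1%:R)^-1) /\ 6 * 3 ^+ k * k.+1%:R < on (tk k).
  exact: (proj2_sig (cid (H1 k))).
set q : R := 3^-1.
have q0 : 0 < q by rewrite /q invr_gt0.
have H2 : forall k x, exists x', hn (x' - x) <= q ^+ k /\
    2 / 3 * q ^+ k * on (tk k) <= hn (U (tk k) x').
  move=> k x; apply: sokal; first by case: (tkP k) => [[]].
  exact: exprn_gt0.
pose step k x := proj1_sig (cid (H2 k x)).
have stepP k x : hn (step k x - x) <= q ^+ k /\
    2 / 3 * q ^+ k * on (tk k) <= hn (U (tk k) (step k x)).
  exact: (proj2_sig (cid (H2 k x))).
pose xs := fix f (n : nat) := match n with 0%N => 0 | k.+1 => step k (f k) end.
have xsS k : xs k.+1 = step k (xs k) by [].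
have geo k m : hn (xs (k + m)%N - xs k) <= 3 / 2 * (q ^+ k - q ^+ (k + m)).
  elim: m => [|m IH]; first by rewrite addn0 subrr (hn0 Hh) subrr mulr0.
  rewrite addnS xsS (_ : step _ _ - _ = (step (k + m) (xs (k + m)) - xs (k + m))
      + (xs (k + m) - xs k)); last by rewrite addrA subrK.
  apply: le_trans (hnD Hh _ _) _.
  apply: le_trans (lerD (proj1 (stepP _ _)) IH) _.
  rewrite exprSr /q; lra.
have geo2 k m : hn (xs (k + m)%N - xs k) <= 3 / 2 * q ^+ k.
  apply: le_trans (geo k m) _; rewrite ler_pM2l ?gerDl ?oppr_le0 ?exprn_ge0 ?ltW //.
  by rewrite divr_gt0.
have qsmall e : 0 < e -> exists N : nat, q ^+ N < e.
  move=> e0; have [N HN] := archi_nat (e^-1); exists N.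
  have h3 : e^-1 < 3 ^+ N.
    apply: lt_trans HN _; rewrite -(natrX R 3 N) ltr_nat; exact: ltn_expl.
  rewrite /q exprVn -[e]invrK ltf_pV2 ?posrE ?invr_gt0 ?exprn_gt0 //.
have cauchy : forall e : R, 0 < e -> exists N : nat, forall m n : nat,
    (N <= m)%N -> (N <= n)%N -> hn (xs m - xs n) < e.
  move=> e e0; have [N HN] := qsmall (e / 3) (divr_gt0 e0 (ltr0Sn _ _)).
  exists N => m n /subnK <- /subnK <-.
  rewrite (_ : _ - _ = (xs (m - N + N)%N - xs N) - (xs (n - N + N)%N - xs N));
    last by rewrite opprB addrA subrK.
  apply: le_lt_trans (hnD Hh _ _) _; rewrite (hnN Hh) !(addnC _ N).
  apply: le_lt_trans (lerD (geo2 _ _) (geo2 _ _)) _; lra.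
have [l Hl] : exists l : V, forall e : R, 0 < e -> exists N : nat, forall n : nat,
             (N <= n)%N -> hn (xs n - l) < e by case: Hh => _ _ _ _; apply.
have lim k : hn (l - xs k) <= 3 / 2 * q ^+ k.
  apply/ler_addgt0Pr => e e0; have [N HN] := Hl e e0.
  have := HN (maxn N k) (leq_maxl _ _).
  rewrite -(subnK (leq_maxr N k)) addnC => h.
  rewrite (_ : l - _ = - (xs (k + (maxn N k - k))%N - l) + (xs (k + (maxn N k - k))%N - xs k));
    last by rewrite opprB addrA subrK.
  apply: le_trans (hnD Hh _ _) _; rewrite (hnN Hh) addrC.
  by apply: lerD; [exact: geo2 | exact: ltW].
have big k : k.+1%:R < hn (U (tk k) l).
  have [[t0 _] hon] := tkP k.
  have o0 : 0 <= on (tk k) by exact: on_ge0.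
  have h1 := proj2 (stepP k (xs k)); rewrite -xsS in h1.
  have h2 : hn (U (tk k) (xs k.+1 - l)) <= on (tk k) * (3 / 2 * q ^+ k.+1).
    apply: le_trans (on_bound _ t0) _; apply: ler_wpM2l => //.
    by rewrite (hnB Hh); exact: lim.
  have h3 := hnB_le Hh (U (tk k) (xs k.+1)) (U (tk k) l).
  rewrite -UB // in h3.
  have key : forall o p a b c : R, 2/3 * p * o <= a ->
      c <= o * (3/2 * (p * 3^-1)) -> a - b <= c -> o * p / 6 <= b.
    by move=> o p a b c G1 G2 G3; nra.
  have h4 : on (tk k) * q ^+ k / 6 <= hn (U (tk k) l).
    by apply: key h1 _ h3; rewrite -exprSr.
  have e3 : q ^+ k * 3 ^+ k = 1 by rewrite /q exprVn mulVf // expf_neq0 // pnatr_eq0.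
  have qk0 : 0 < q ^+ k by exact: exprn_gt0.
  apply: lt_le_trans h4; move: hon e3 qk0.
  set o := on _; set p := q ^+ k; set w := 3 ^+ k; move=> G1 G2 G3.
  have : 6 * w * k.+1%:R * p < o * p by rewrite ltr_pM2r.
  have E : 6 * w * k.+1%:R * p = 6 * k.+1%:R by rewrite -[RHS]mulr1 -G2; ring.
  rewrite E => G4.
  have : (0:R) <= k.+1%:R by [].
  lra.
have [d [d0 Hd]] := U_sc l (ltr01 : (0:R) < 1).
have [k Hk] := archi_nat (Num.max (d^-1) (hn l + 1)).
move: Hk; rewrite gt_max => /andP[k1 k2].
have [[t0 t1] _] := tkP k.
have tl : tk k < d.
  apply: le_lt_trans t1 _.
  rewrite -[d]invrK ltf_pV2 ?posrE ?invr_gt0 //.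
  by apply: lt_trans k1 _; rewrite ltr_nat.
have := Hd _ t0 tl => h.
have := hnB_le Hh (U (tk k) l) l => h'.
have := big k; have : (k%:R : R) < k.+1%:R by rewrite ltr_nat.
lra.
Qed.

Lemma U_locbound T : exists M, 0 <= M /\
  forall t, 0 <= t -> t <= T -> forall x, hn (U t x) <= M * hn x.
Proof.
have [d [M [d0 HM]]] := U_locbound0.
have hM : forall t, 0 <= t -> t <= d -> forall x, hn (U t x) <= `|M| * hn x.
  move=> s s0 s1 y; apply: le_trans (HM s s0 s1 y) _.
  by apply: ler_wpM2r; [exact: hn_ge0|exact: ler_norm].
have Hn : forall n : nat, exists Mn, 0 <= Mn /\ forall t, 0 <= t ->
    t <= n%:R * d -> forall x, hn (U t x) <= Mn * hn x.
  elim => [|n [Mn [Mn0 HMn]]].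
    exists 1; split => // t t0; rewrite mul0r => t1 x.
    have -> : t = 0 by apply/eqP; rewrite eq_le t1 t0.
    by rewrite U_0 mul1r.
  exists (`|M| + Mn * `|M|); split; first by rewrite addr_ge0 ?mulr_ge0.
  move=> t t0 t1 x.
  have [td|td] := leP t d.
    apply: le_trans (hM t t0 td x) _; rewrite mulrDl lerDl.
    by apply: mulr_ge0; [apply: mulr_ge0 | exact: hn_ge0].
  have td0 : 0 <= t - d by rewrite subr_ge0 (ltW td).
  have -> : t = (t - d) + d by rewrite subrK.
  have d0' := ltW d0; rewrite U_semi //.
  apply: le_trans (HMn _ td0 _ _) _.
    by move: t1; rewrite -natr1 mulrDl mul1r -lerBlDr.
  rewrite mulrDl; apply: le_trans (_ : Mn * (`|M| * hn x) <= _).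
    by apply: ler_wpM2l => //; apply: hM; rewrite ?lexx.
  by rewrite mulrA lerDr; apply: mulr_ge0; [exact: normr_ge0 | exact: hn_ge0].
have [n Hn'] := archi_nat (T / d).
have [Mn [Mn0 HMn]] := Hn n; exists Mn; split => // t t0 tT x; apply: HMn => //.
apply: le_trans tT _; rewrite -ler_pdivrMr //; exact: ltW.
Qed.

Lemma U_cont x t : 0 <= t -> forall e : R, 0 < e -> exists d : R, 0 < d /\
  forall s, 0 <= s -> `|s - t| < d -> hn (U s x - U t x) < e.
Proof.
move=> t0 e e0; have [M [M0 HM]] := U_locbound t.
have e'0 : 0 < e / (M + 1) by rewrite divr_gt0 // ltr_wpDl.
have [d [d0 Hd]] := U_sc x e'0.
have fin : forall v, hn v < e / (M + 1) -> M * hn v < e.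
  move=> v hv; apply: le_lt_trans (_ : M * (e / (M + 1)) < e).
    by apply: ler_wpM2l => //; exact: ltW.
  rewrite mulrA ltr_pdivrMr ?ltr_wpDl //; nra.
exists d; split => // s s0 hs.
have [st|st] := leP t s.
  have -> : s = t + (s - t) by rewrite addrC subrK.
  have st0 : 0 <= s - t by rewrite subr_ge0.
  rewrite U_semi // -UB //; apply: le_lt_trans (HM _ t0 (lexx t) _) _.
  apply: fin; apply: Hd => //; move: hs; rewrite ger0_norm //.
have ts0 : 0 <= t - s by rewrite subr_ge0 ltW.
have -> : t = s + (t - s) by rewrite addrC subrK.
rewrite U_semi // -UB //.
apply: le_lt_trans (HM _ s0 (ltW st) _) _.
apply: fin; rewrite (hnB Hh); apply: Hd => //; move: hs; rewrite ler0_norm ?opprB //.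
by rewrite subr_le0 ltW.
Qed.

Lemma gen_shift x y t : is_gen ip U x y -> 0 <= t -> is_gen ip U (U t x) (U t y).
Proof.
move=> G t0 e e0.
have [M HM] := U_bd t0.
have e'0 : 0 < e / (`|M| + 1) by rewrite divr_gt0 // ltr_wpDl.
have [d [d0 Hd]] := G _ e'0.
exists d; split => // h h0 hd.
have E : (h^-1)%:C *: (U h (U t x) - U t x) - U t y =
    U t ((h^-1)%:C *: (U h x - x) - y).
  have h0' := ltW h0.
  have S : U h (U t x) = U t (U h x) by rewrite -U_semi // [h + t]addrC U_semi.
  by rewrite S UB // UZ // UB.
rewrite E; apply: le_lt_trans (HM _) _.
apply: le_lt_trans (_ : `|M| * hn ((h^-1)%:C *: (U h x - x) - y) < _).
  by apply: ler_wpM2r; [exact: hn_ge0 | exact: ler_norm].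
apply: le_lt_trans (_ : `|M| * (e / (`|M| + 1)) < e).
  by apply: ler_wpM2l => //; apply: ltW; apply: Hd.
rewrite mulrA ltr_pdivrMr ?ltr_wpDl //; nra.
Qed.

End SG.


Section RealInd.
Variable R : realType.
Local Notation C := R[i].

Lemma RI (a b : R) (G : R -> Prop) : a <= b ->
  (forall x, a <= x -> x <= b -> (forall y, a <= y -> y < x -> G y) ->
     exists d, 0 < d /\ forall y, a <= y -> y < x + d -> G y) -> G b.
Proof.
move=> ab H.
pose S := [set x : R | a <= x /\ x <= b /\ forall y, a <= y -> y < x -> G y]%classic.
have aS : S a by split; [exact: lexx | split => // y ay ya; exfalso; move: ay; rewrite leNgt ya].
have hs : has_sup S by split; [exists a | exists b => x [_ []]].
set s := sup S.
have as_ : a <= s by apply: sup_upper_bound hs _ aS.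
have sb : s <= b by apply: ge_sup; [exists a | move=> x [_ []]].
have Gs : forall y, a <= y -> y < s -> G y.
  move=> y ay ys.
  have sy : 0 < s - y by rewrite subr_gt0.
  have [e [_ [_ He]] ye] := sup_adherent sy hs.
  by apply: He => //; move: ye; rewrite opprB addrCA subrr addr0.
have [d [d0 Hd]] := H s as_ sb Gs.
have [sb'|] := ltP s b; last first.
  by move=> bs; apply: Hd => //; apply: le_lt_trans bs _; rewrite ltrDl.
exfalso.
pose x' := Num.min (s + d / 2) b.
have x'S : S x'.
  have d2 : 0 <= d / 2 by rewrite divr_ge0 // ltW.
  split; first by rewrite le_min ab andbT; apply: le_trans as_ _; rewrite lerDl.
  split; first by rewrite ge_min lexx orbT.
  move=> y ay yx; apply: Hd => //; apply: lt_le_trans yx _.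
  by rewrite ge_min; apply/orP; left; rewrite lerD2l ler_pdivrMr // ler_pMr //; lra.
have : x' <= s by apply: sup_upper_bound hs _ x'S.
rewrite ge_min => /orP[|]; last by rewrite leNgt sb'.
rewrite -lerBrDl subrr; move: d0; lra.
Qed.


Lemma le_of_forall_lt (x y : R) : (forall e : R, 0 < e -> x <= y + e) -> x <= y.
Proof. by move=> h; apply/ler_addgt0Pr. Qed.

Lemma uc (f : R -> C) T : ccont_nonneg f -> 0 <= T ->
  forall e : R, 0 < e -> exists d : R, 0 < d /\ forall s t, 0 <= s -> s <= T ->
    0 <= t -> t <= T -> `|s - t| < d -> cnorm (f s - f t) < e.
Proof.
move=> cf T0 e e0.
pose G y := exists d : R, 0 < d /\ forall s t, 0 <= s -> s <= y ->
    0 <= t -> t <= y -> `|s - t| < d -> cnorm (f s - f t) < e.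
suff : G T by case=> d [d0 Hd]; exists d; split.
apply: RI T0 _ => x x0 xT Hy.
have e2 : 0 < e / 2 by rewrite divr_gt0.
have [d0 [d00 Hd0]] := cf x x0 _ e2.
set y0 := x - d0 / 2.
have [d1 [d10 Hd1]] : G y0.
  have [y00|y00] := leP 0 y0.
    by apply: Hy => //; rewrite /y0 gtrBl divr_gt0.
  by exists 1; split => // s t s0 sy; exfalso; move: (le_lt_trans (le_trans s0 sy) y00); rewrite ltxx.
exists (d0 / 2); split; first by rewrite divr_gt0.
move=> y y0' yx; exists (Num.min d1 (d0 / 2)); split; first by rewrite lt_min d10 divr_gt0.
move=> s t s0 sy t0 ty; rewrite lt_min => /andP[st1 st2].
have d2d : d0 / 2 < d0 by rewrite ltr_pdivrMr // ltr_pMr // ltr1n.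
have [sy0|sy0] := leP s y0; have [ty0|ty0] := leP t y0.
- exact: Hd1.
- have ht : `|t - x| < d0 / 2.
    rewrite ltr_norml; apply/andP; split; move: ty0 ty yx; rewrite /y0; lra.
  have hs : `|s - x| < d0.
    have := ler_normD (s - t) (t - x); rewrite addrA subrK.
    by move: st2 ht; lra.
  rewrite (_ : f s - f t = (f s - f x) - (f t - f x)); last by rewrite opprB addrA subrK.
  apply: le_lt_trans (cnormD _ _) _; rewrite cnormN.
  have := Hd0 _ s0 hs; have := Hd0 _ t0 (lt_trans ht d2d); lra.
- have hs : `|s - x| < d0 / 2.
    rewrite ltr_norml; apply/andP; split; move: sy0 sy yx; rewrite /y0; lra.
  have ht : `|t - x| < d0.
    have := ler_normD (t - s) (s - x); rewrite addrA subrK (distrC t s).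
    by move: st2 hs; lra.
  rewrite (_ : f s - f t = (f s - f x) - (f t - f x)); last by rewrite opprB addrA subrK.
  apply: le_lt_trans (cnormD _ _) _; rewrite cnormN.
  have := Hd0 _ t0 ht; have := Hd0 _ s0 (lt_trans hs d2d); lra.
- have hs : `|s - x| < d0 / 2.
    rewrite ltr_norml; apply/andP; split; move: sy0 sy yx; rewrite /y0; lra.
  have ht : `|t - x| < d0 / 2.
    rewrite ltr_norml; apply/andP; split; move: ty0 ty yx; rewrite /y0; lra.
  rewrite (_ : f s - f t = (f s - f x) - (f t - f x)); last by rewrite opprB addrA subrK.
  apply: le_lt_trans (cnormD _ _) _; rewrite cnormN.
  have := Hd0 _ t0 (lt_trans ht d2d); have := Hd0 _ s0 (lt_trans hs d2d); lra.
Qed.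


Lemma bdd (f : R -> C) T : ccont_nonneg f -> 0 <= T ->
  exists B : R, 0 <= B /\ forall s, 0 <= s -> s <= T -> cnorm (f s) <= B.
Proof.
move=> cf T0.
pose G y := exists B : R, 0 <= B /\ forall s, 0 <= s -> s <= y -> cnorm (f s) <= B.
apply: (@RI 0 T G) T0 _ => x x0 xT Hy.
have [d0 [d00 Hd0]] := cf x x0 _ ltr01.
set y0 := x - d0 / 2.
have [B0 [B00 HB0]] : G y0.
  have [y00|y00] := leP 0 y0.
    by apply: Hy => //; rewrite /y0 gtrBl divr_gt0.
  by exists 0; split => // s s0 sy; exfalso; move: (le_lt_trans (le_trans s0 sy) y00); rewrite ltxx.
exists (d0 / 2); split; first by rewrite divr_gt0.
move=> y y0' yx; exists (B0 + (cnorm (f x) + 1)); split.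
  by rewrite addr_ge0 // addr_ge0 // cnorm_ge0.
move=> s s0 sy; have [sy0|sy0] := leP s y0.
  by apply: le_trans (HB0 s s0 sy0) _; rewrite lerDl addr_ge0 // cnorm_ge0.
have hs : `|s - x| < d0.
  rewrite ltr_norml; apply/andP; split; move: sy0 sy yx d00; rewrite /y0; lra.
have := Hd0 _ s0 hs; have := cnormB_le (f s) (f x); move: B00; lra.
Qed.

Definition rderiv (f g : R -> C) := forall t, 0 <= t -> forall e : R, 0 < e ->
  exists d : R, 0 < d /\ forall h : R, 0 < h -> h < d ->
    cnorm ((h^-1)%:C * (f (t + h) - f t) - g t) < e.

Lemma rd_bound (h e : R) (D g : C) : 0 < h ->
  cnorm ((h^-1)%:C * D - g) < e -> cnorm D <= h * (cnorm g + e).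
Proof.
move=> h0 H.
have -> : D = h%:C * ((h^-1)%:C * D - g) + h%:C * g.
  rewrite mulrBr addrNK mulrA -rmorphM /= mulfV ?gt_eqF // mul1r //.
apply: le_trans (cnormD _ _) _; rewrite !cnormM cnormR gtr0_norm //.
rewrite mulrDr addrC lerD2l ler_pM2l //; exact: ltW.
Qed.

Lemma MVT (f g : R -> C) (a b L : R) : ccont_nonneg f -> rderiv f g ->
  0 <= a -> a <= b -> 0 <= L -> (forall x, a <= x -> x < b -> cnorm (g x) <= L) ->
  cnorm (f b - f a) <= L * (b - a).
Proof.
move=> cf df a0 ab L0 Hg.
have ba1 : 0 < b - a + 1 by rewrite ltr_wpDl // subr_ge0.
apply: le_of_forall_lt => e0 e00.
pose e := e0 / (b - a + 1).
have e0' : 0 < e by rewrite divr_gt0.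
pose G y := y <= b -> cnorm (f y - f a) <= (L + e) * (y - a) + e.
suff : G b.
  move/(_ (lexx b)) => H; apply: le_trans H _.
  have E : e * (b - a + 1) = e0 by rewrite /e divfK ?gt_eqF.
  move: E; nra.
apply: (@RI a b G) ab _ => x ax xb Hy.
have Gx : cnorm (f x - f a) <= (L + e) * (x - a) + e.
  have [xa|xa] := leP x a.
    have -> : x = a by apply/eqP; rewrite eq_le xa ax.
    by rewrite !subrr cnorm0 mulr0 add0r ltW.
  apply: le_of_forall_lt => eta eta0.
  have [d0 [d00 Hd0]] := cf x (le_trans a0 ax) _ eta0.
  set y := Num.max a (x - d0 / 2).
  have ay : a <= y by rewrite le_max lexx.
  have yx : y < x by rewrite gt_max xa gtrBl divr_gt0.
  have hy := Hy y ay yx (ltW (lt_le_trans yx xb)).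
  have hyx : `|y - x| < d0.
    rewrite ltr_norml; apply/andP; split; last by move: yx d00; lra.
    have : x - d0 / 2 <= y by rewrite le_max lexx orbT.
    move: d00; lra.
  have := Hd0 y (le_trans a0 ay) hyx.
  rewrite cnormB => h1.
  have h2 := cnormD (f x - f y) (f y - f a).
  rewrite addrA subrK in h2.
  have h3 : (L + e) * (y - a) <= (L + e) * (x - a).
    by apply: ler_wpM2l; [rewrite addr_ge0 // ltW | rewrite lerD2r (ltW yx)].
  move: h1 h2 h3 hy; lra.
have [xb'|xb'] := ltP x b; last first.
  exists 1; split => // y ay yx1 yb.
  have [yx|yx] := ltP y x; first exact: Hy.
  have -> : y = x by apply/eqP; rewrite eq_le (le_trans yb xb') yx.
  exact: Gx.
have [d1 [d10 Hd1]] := df x (le_trans a0 ax) _ e0'.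
exists d1; split => // y ay yd yb.
have [yx|yx] := ltP y x; first exact: Hy.
have [yx'|yx'] := leP y x.
  by have -> : y = x by apply/eqP; rewrite eq_le yx yx'.
set h := y - x.
have h0 : 0 < h by rewrite subr_gt0.
have hd : h < d1 by rewrite /h ltrBlDl.
have := Hd1 h h0 hd.
have -> : x + h = y by rewrite /h addrC subrK.
move=> /(rd_bound h0) H.
have hg := Hg x ax xb'.
have h2 := cnormD (f y - f x) (f x - f a).
rewrite addrA subrK in h2.
have h3 : h * (cnorm (g x) + e) <= h * (L + e) by apply: ler_wpM2l; [exact: ltW | rewrite lerD2r].
rewrite -/h in H; move: H h2 h3 Gx; rewrite /h.
have : (L + e) * (y - a) = (L + e) * (y - x) + (L + e) * (x - a) by rewrite -mulrDr addrA subrK.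
nra.
Qed.


Lemma archi_nat' (x : R) : exists n : nat, x < n%:R.
Proof.
exists (Num.Def.archi_bound (Num.max x 0)).
apply: le_lt_trans (archi_boundP _); first by rewrite le_max lexx.
by rewrite le_max lexx orbT.
Qed.

Lemma pow2_small (B eta : R) : 0 <= B -> 0 < eta -> exists k : nat, B / 2 ^+ k < eta.
Proof.
move=> B0 eta0; have [k Hk] := archi_nat' (B / eta); exists k.
have p0 : 0 < (2 : R) ^+ k by rewrite exprn_gt0.
rewrite ltr_pdivrMr //; rewrite ltr_pdivrMr // in Hk.
apply: lt_le_trans Hk _; rewrite mulrC; apply: ler_wpM2l; first exact: ltW.
by rewrite -(natrX R 2 k) ler_nat ltnW // ltn_expl.
Qed.

Lemma ode0 (e : R -> C) (b : C) : ccont_nonneg e -> rderiv e (fun t => b * e t) ->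
  e 0 = 0 -> forall t, 0 <= t -> e t = 0.
Proof.
move=> ce de e00 t t0.
pose G y := forall s, 0 <= s -> s <= y -> e s = 0.
suff : G t by apply.
apply: (@RI 0 t G) t0 _ => x x0 xt Hy.
have Hlt : forall s, 0 <= s -> s < x -> e s = 0.
  by move=> s s0 sx; exact: (Hy s s0 sx s s0 (lexx s)).
have ex0 : e x = 0.
  have [xz|xz] := leP x 0.
    by have -> : x = 0 by apply/eqP; rewrite eq_le xz x0.
  apply: cnorm_eq0; apply/eqP; rewrite eq_le cnorm_ge0 andbT.
  apply: le_of_forall_lt => eta eta0; rewrite add0r.
  have [d0 [d00 Hd0]] := ce x x0 _ eta0.
  set y := Num.max 0 (x - d0 / 2).
  have y0 : 0 <= y by rewrite le_max lexx.
  have yx : y < x by rewrite gt_max xz gtrBl divr_gt0.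
  have hyx : `|y - x| < d0.
    rewrite ltr_norml; apply/andP; split; last by move: yx d00; lra.
    have : x - d0 / 2 <= y by rewrite le_max lexx orbT.
    move: d00; lra.
  by have := Hd0 y y0 hyx; rewrite Hlt // sub0r cnormN => h; exact: ltW.
set c := cnorm b.
have c0 : 0 <= c by exact: cnorm_ge0.
set del := (2 * c + 2)^-1.
have del0 : 0 < del by rewrite invr_gt0; lra.
have bdel : c * del <= 1 / 2 by rewrite /del ler_pdivrMr; lra.
have [B [B0 HB]] := bdd ce (addr_ge0 x0 (ltW del0)).
have Hk : forall k : nat, forall s, 0 <= s -> s <= x + del -> cnorm (e s) <= B / 2 ^+ k.
  elim => [|k IH] s s0 sx; first by rewrite expr0 divr1; exact: HB.
  have p0 : 0 < (2 : R) ^+ k by rewrite exprn_gt0.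
  have [sx'|sx'] := leP s x.
    have -> : e s = 0.
      have [sx''|sx''] := ltP s x; first exact: Hlt.
      by have -> : s = x by apply/eqP; rewrite eq_le sx' sx''.
    by rewrite cnorm0 divr_ge0 // exprn_ge0.
  set w := B / 2 ^+ k.
  have w0 : 0 <= w by rewrite divr_ge0 // ltW.
  have L0 : 0 <= c * w by rewrite mulr_ge0.
  have Hg : forall r, x <= r -> r < s -> cnorm (b * e r) <= c * w.
    move=> r xr rs; rewrite cnormM; apply: ler_wpM2l => //; apply: IH.
      exact: le_trans x0 xr.
    by apply: le_trans sx; apply: ltW.
  have H := MVT ce de x0 (ltW sx') L0 Hg.
  rewrite ex0 subr0 in H; apply: le_trans H _.
  have -> : B / 2 ^+ k.+1 = w / 2 by rewrite /w exprS invfM; ring.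
  have sxd : s - x <= del by rewrite lerBlDl.
  have sx0 : 0 <= s - x by rewrite subr_ge0 ltW.
  have h1 : c * w * (s - x) <= c * w * del by rewrite ler_wpM2l.
  apply: le_trans h1 _; rewrite mulrAC.
  have := ler_wpM2r w0 bdel; lra.
exists del; split => // y y0 yd s s0 sy.
apply: cnorm_eq0; apply/eqP; rewrite eq_le cnorm_ge0 andbT.
apply: le_of_forall_lt => eta eta0; rewrite add0r.
have [k Hk'] := pow2_small B0 eta0.
apply: le_trans (Hk k s s0 _) (ltW Hk').
by apply: le_trans sy _; exact: ltW.
Qed.

End RealInd.


Section Riemann.
Variable R : realType.
Local Notation C := R[i].
Implicit Types (t d B : R) (n : nat) (p xi : nat -> R) (f g : R -> C) (I J : C).

Definition Rsum (n : nat) (p xi : nat -> R) (f : R -> C) : C :=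
  \sum_(i < n) ((p i.+1 - p i)%:C * f (xi i)).

Lemma tp_step t d n p xi i : is_tagged_partition t d n p xi -> (i < n)%N ->
  [/\ p i <= xi i, xi i <= p i.+1 & p i.+1 - p i < d].
Proof. by case=> _ _ H; apply: H. Qed.

Lemma tp_mono t d n p xi i j : is_tagged_partition t d n p xi ->
  (i <= j)%N -> (j <= n)%N -> p i <= p j.
Proof.
move=> P ij jn; elim: j ij jn => [|j IH] ij jn.
  by rewrite leqn0 in ij; rewrite (eqP ij).
rewrite leq_eqVlt in ij; case/orP: ij => [/eqP -> //|ij].
have [h1 h2 _] := tp_step P jn.
apply: le_trans (IH ij (ltnW jn)) _; exact: le_trans h1 h2.
Qed.

Lemma tp_t0 t d n p xi : is_tagged_partition t d n p xi -> 0 <= t.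
Proof.
move=> P; case: (P) => p0 pn _; rewrite -pn -p0; exact: tp_mono P (leq0n n) (leqnn n).
Qed.

Lemma tp_range t d n p xi i : is_tagged_partition t d n p xi -> (i < n)%N ->
  0 <= xi i /\ xi i <= t.
Proof.
move=> P iN; case: (P) => p0 pn _; have [h1 h2 _] := tp_step P iN; split.
  by rewrite -p0; apply: le_trans h1; exact: tp_mono P (leq0n i) (ltnW iN).
by rewrite -pn; apply: le_trans h2 _; exact: tp_mono P iN (leqnn n).
Qed.

Lemma tp_delta t d n p xi i : is_tagged_partition t d n p xi -> (i < n)%N ->
  0 <= p i.+1 - p i.
Proof. by move=> P iN; have [h1 h2 _] := tp_step P iN; rewrite subr_ge0 (le_trans h1 h2). Qed.

Lemma Rsum_tele n (p : nat -> R) : \sum_(i < n) (p i.+1 - p i) = p n - p 0%N.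
Proof. by rewrite -(big_mkord xpredT (fun i => p i.+1 - p i)) telescope_sumr. Qed.

Lemma Rsum_bound t d n p xi f B : is_tagged_partition t d n p xi ->
  (forall s, 0 <= s -> s <= t -> cnorm (f s) <= B) -> cnorm (Rsum n p xi f) <= t * B.
Proof.
move=> P HB; apply: le_trans (cnorm_sum _ _ _) _.
apply: le_trans (_ : \sum_(i < n) (p i.+1 - p i) * B <= _).
  apply: ler_sum => i _; rewrite cnormM cnormR ger0_norm ?(tp_delta P (ltn_ord i)) //.
  apply: ler_wpM2l; first exact: tp_delta P (ltn_ord i).
  by have [h1 h2] := tp_range P (ltn_ord i); apply: HB.
by rewrite -mulr_suml Rsum_tele; case: P => -> -> _; rewrite subr0.
Qed.

Lemma Rsum_lin n p xi (a : C) f g :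
  Rsum n p xi (fun s => a * f s + g s) = a * Rsum n p xi f + Rsum n p xi g.
Proof.
rewrite /Rsum mulr_sumr -big_split /=; apply: eq_bigr => i _; ring.
Qed.

Lemma Rsum_ext n p xi f g : (forall s, f s = g s) -> Rsum n p xi f = Rsum n p xi g.
Proof. by move=> H; apply: eq_bigr => i _; rewrite H. Qed.

Lemma Rsum_const n p xi (c : C) : Rsum n p xi (fun _ => c) = (p n - p 0%N)%:C * c.
Proof.
rewrite /Rsum -mulr_suml; congr (_ * _).
by rewrite -Rsum_tele rmorph_sum /=; apply: eq_bigr => i _; rewrite rmorphB.
Qed.

Definition upart (n : nat) (t : R) (i : nat) : R := i%:R * (t / n%:R).

Lemma upart_tp t d n : 0 <= t -> (0 < n)%N -> t / n%:R < d ->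
  is_tagged_partition t d n (upart n t) (upart n t).
Proof.
move=> t0 n0 td; split.
- by rewrite /upart mul0r.
- by rewrite /upart mulrC divfK // pnatr_eq0 -lt0n.
move=> i iN; split => //.
- by rewrite /upart ler_wpM2r ?divr_ge0 // ler_nat.
- by rewrite /upart -mulrBl -natrB // subSnn mul1r.
Qed.

Lemma exists_upart t d : 0 <= t -> 0 < d -> exists n : nat, (0 < n)%N /\ t / n%:R < d.
Proof.
move=> t0 d0; have [n Hn] := archi_nat' (t / d); exists n.+1; split => //.
rewrite ltr_pdivrMr // mulrC -ltr_pdivrMr //; apply: lt_trans Hn _; rewrite ltr_nat.
by [].
Qed.

Lemma cint_unique f t I J : 0 <= t -> is_cint f t I -> is_cint f t J -> I = J.
Proof.
move=> t0 HI HJ; apply/eqP; rewrite -subr_eq0; apply/eqP; apply: cnorm_eq0.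
apply/eqP; rewrite eq_le cnorm_ge0 andbT; apply: le_of_forall_lt => e e0; rewrite add0r.
have e2 : 0 < e / 2 by rewrite divr_gt0.
have [d1 [d10 H1]] := HI _ e2; have [d2 [d20 H2]] := HJ _ e2.
have dd : 0 < Num.min d1 d2 by rewrite lt_min d10 d20.
have [n [n0 Hn]] := exists_upart t0 dd.
have P := upart_tp t0 n0 Hn.
have P1 : is_tagged_partition t d1 n (upart n t) (upart n t).
  by apply: upart_tp => //; apply: lt_le_trans Hn _; rewrite ge_min lexx.
have P2 : is_tagged_partition t d2 n (upart n t) (upart n t).
  by apply: upart_tp => //; apply: lt_le_trans Hn _; rewrite ge_min lexx orbT.
have := H1 _ _ _ P1; have := H2 _ _ _ P2.
set S := \sum_(i < n) _.
move=> h2 h1; rewrite (sub3 I J S).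
apply: le_trans (cnormD _ _) _; rewrite cnormN; move: h1 h2; lra.
Qed.

Lemma cint_bound f t I B : 0 <= t -> is_cint f t I ->
  (forall s, 0 <= s -> s <= t -> cnorm (f s) <= B) -> cnorm I <= t * B.
Proof.
move=> t0 HI HB; apply: le_of_forall_lt => e e0.
have [d [d0 Hd]] := HI _ e0.
have [n [n0 Hn]] := exists_upart t0 d0.
have P := upart_tp t0 n0 Hn.
have h1 := Hd _ _ _ P.
have h2 := Rsum_bound P HB; rewrite /Rsum in h2.
set S := \sum_(i < n) _ in h1 h2.
rewrite (subKK I S).
apply: le_trans (cnormD _ _) _; rewrite cnormN; move: h1 h2; lra.
Qed.

Lemma cint_lin f g t I J (a : C) : is_cint f t I -> is_cint g t J ->
  is_cint (fun s => a * f s + g s) t (a * I + J).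
Proof.
move=> HI HJ e e0.
have ca := cnorm_ge0 a.
have e1 : 0 < e / 2 / (cnorm a + 1) by rewrite !divr_gt0 // ltr_wpDl.
have e2 : 0 < e / 2 by rewrite divr_gt0.
have [d1 [d10 H1]] := HI _ e1; have [d2 [d20 H2]] := HJ _ e2.
exists (Num.min d1 d2); split; first by rewrite lt_min d10 d20.
move=> n p xi P.
have P1 : is_tagged_partition t d1 n p xi.
  case: P => a1 a2 a3; split => // i iN; have [b1 b2 b3] := a3 i iN; split => //.
  by apply: lt_le_trans b3 _; rewrite ge_min lexx.
have P2 : is_tagged_partition t d2 n p xi.
  case: P => a1 a2 a3; split => // i iN; have [b1 b2 b3] := a3 i iN; split => //.
  by apply: lt_le_trans b3 _; rewrite ge_min lexx orbT.
have := H1 _ _ _ P1; have := H2 _ _ _ P2.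
have := Rsum_lin n p xi a f g; rewrite /Rsum => ->.
set Sg := \sum_(i < n) _; set Sf := \sum_(i < n) _ => h2 h1.
rewrite (_ : a * Sf + Sg - (a * I + J) = a * (Sf - I) + (Sg - J)); last by ring.
apply: le_lt_trans (cnormD _ _) _; rewrite cnormM.
have : cnorm a * cnorm (Sf - I) <= e / 2.
  apply: le_trans (_ : cnorm a * (e / 2 / (cnorm a + 1)) <= _).
    by apply: ler_wpM2l => //; exact: ltW.
  rewrite mulrA ler_pdivrMr ?ltr_wpDl //; nra.
move: h2; lra.
Qed.

Lemma cint_ext f g t I : (forall s, f s = g s) -> is_cint f t I -> is_cint g t I.
Proof. by move=> H; rewrite (_ : f = g) //; apply: funext. Qed.


Definition pcat n1 (a : R) p1 p2 (i : nat) : R :=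
  if (i <= n1)%N then p1 i else a + p2 (i - n1)%N.
Definition xcat n1 (a : R) xi1 xi2 (i : nat) : R :=
  if (i < n1)%N then xi1 i else a + xi2 (i - n1)%N.

Lemma pcat_hi n1 a p1 p2 j : p1 n1 = a -> p2 0%N = 0 ->
  pcat n1 a p1 p2 (n1 + j)%N = a + p2 j.
Proof.
move=> h1 h2; rewrite /pcat; case: ifP => [|_]; last by rewrite addKn.
by rewrite -{2}[n1]addn0 leq_add2l leqn0 => /eqP ->; rewrite addn0 h1 h2 addr0.
Qed.

Lemma tp_cat a b d n1 n2 p1 p2 xi1 xi2 :
  is_tagged_partition a d n1 p1 xi1 -> is_tagged_partition b d n2 p2 xi2 ->
  is_tagged_partition (a + b) d (n1 + n2) (pcat n1 a p1 p2) (xcat n1 a xi1 xi2).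
Proof.
move=> P1 P2; case: (P1) => p10 p1n H1; case: (P2) => p20 p2n H2; split.
- by rewrite /pcat leq0n.
- by rewrite pcat_hi // p2n.
move=> i iN; have [iN1|iN1] := ltnP i n1.
  have [c1 c2 c3] := H1 i iN1.
  by rewrite /pcat /xcat iN1 ltnW // ltnS ltnW.
have -> : i = (n1 + (i - n1))%N by rewrite subnKC.
have jn : (i - n1 < n2)%N by rewrite ltn_subLR.
have [c1 c2 c3] := H2 _ jn.
rewrite -addnS !pcat_hi // /xcat ltnNge leq_addr /= addKn.
by split; rewrite ?lerD2l // opprD addrACA subrr add0r.
Qed.

Lemma Rsum_cat a d n1 n2 p1 p2 xi1 xi2 f :
  p1 n1 = a -> p2 0%N = 0 ->
  Rsum (n1 + n2) (pcat n1 a p1 p2) (xcat n1 a xi1 xi2) f =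
  Rsum n1 p1 xi1 f + Rsum n2 p2 xi2 (fun s => f (a + s)).
Proof.
move=> h1 h2; rewrite /Rsum big_split_ord /=; congr (_ + _).
  by apply: eq_bigr => i _; rewrite /pcat /xcat /= ltn_ord (ltnW (ltn_ord i)).
apply: eq_bigr => i _; rewrite /= -addnS !pcat_hi // /xcat ltnNge leq_addr /= addKn.
by rewrite opprD addrACA subrr add0r.
Qed.
End Riemann.


Section Conv.
Variable R : realType.
Local Notation C := R[i].
Implicit Types (t d B : R) (n : nat) (p xi : nat -> R) (f g : R -> C) (I J : C).

Lemma tp_mesh t d d' n p xi : is_tagged_partition t d n p xi -> d <= d' ->
  is_tagged_partition t d' n p xi.
Proof.
case=> a1 a2 a3 dd; split => // i iN; have [b1 b2 b3] := a3 i iN; split => //.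
exact: lt_le_trans b3 dd.
Qed.

Lemma Rsum_B n p xi f g :
  Rsum n p xi (fun s => f s - g s) = Rsum n p xi f - Rsum n p xi g.
Proof. by rewrite /Rsum -sumrB; apply: eq_bigr => i _; rewrite mulrBr. Qed.

Lemma Rsum_Z n p xi (c : C) f : Rsum n p xi (fun s => c * f s) = c * Rsum n p xi f.
Proof. by rewrite /Rsum mulr_sumr; apply: eq_bigr => i _; rewrite mulrCA. Qed.

Lemma ccont_lin f g (a : C) : ccont_nonneg f -> ccont_nonneg g ->
  ccont_nonneg (fun s => a * f s + g s).
Proof.
move=> cf cg t t0 e e0.
have ca := cnorm_ge0 a.
have e1 : 0 < e / 2 / (cnorm a + 1) by rewrite !divr_gt0 // ltr_wpDl.
have e2 : 0 < e / 2 by rewrite divr_gt0.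
have [d1 [d10 H1]] := cf t t0 _ e1; have [d2 [d20 H2]] := cg t t0 _ e2.
exists (Num.min d1 d2); split; first by rewrite lt_min d10 d20.
move=> s s0; rewrite lt_min => /andP[s1 s2].
rewrite (_ : a * f s + g s - (a * f t + g t) = a * (f s - f t) + (g s - g t)); last by ring.
apply: le_lt_trans (cnormD _ _) _; rewrite cnormM.
have : cnorm a * cnorm (f s - f t) <= e / 2.
  apply: le_trans (_ : cnorm a * (e / 2 / (cnorm a + 1)) <= _).
    by apply: ler_wpM2l => //; apply: ltW; apply: H1.
  rewrite mulrA ler_pdivrMr ?ltr_wpDl //; nra.
have := H2 s s0 s2; lra.
Qed.

Lemma ccont_const (c : C) : ccont_nonneg (fun _ : R => c).
Proof. by move=> t t0 e e0; exists 1; split => // s _ _; rewrite subrr cnorm0. Qed.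

Lemma ccont_id : ccont_nonneg (fun s : R => s%:C).
Proof. by move=> t t0 e e0; exists e; split => // s _ h; rewrite -rmorphB cnormR. Qed.

Lemma rderiv_lin f f' g g' (a : C) : rderiv f f' -> rderiv g g' ->
  rderiv (fun s => a * f s + g s) (fun s => a * f' s + g' s).
Proof.
move=> df dg t t0 e e0.
have ca := cnorm_ge0 a.
have e1 : 0 < e / 2 / (cnorm a + 1) by rewrite !divr_gt0 // ltr_wpDl.
have e2 : 0 < e / 2 by rewrite divr_gt0.
have [d1 [d10 H1]] := df t t0 _ e1; have [d2 [d20 H2]] := dg t t0 _ e2.
exists (Num.min d1 d2); split; first by rewrite lt_min d10 d20.
move=> h h0; rewrite lt_min => /andP[s1 s2].
set u := (h^-1)%:C.
rewrite (_ : u * (a * f (t + h) + g (t + h) - (a * f t + g t)) - (a * f' t + g' t) =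
   a * (u * (f (t + h) - f t) - f' t) + (u * (g (t + h) - g t) - g' t)); last by ring.
apply: le_lt_trans (cnormD _ _) _; rewrite cnormM.
have : cnorm a * cnorm (u * (f (t + h) - f t) - f' t) <= e / 2.
  apply: le_trans (_ : cnorm a * (e / 2 / (cnorm a + 1)) <= _).
    by apply: ler_wpM2l => //; apply: ltW; apply: H1.
  rewrite mulrA ler_pdivrMr ?ltr_wpDl //; nra.
have := H2 h h0 s2; lra.
Qed.

Lemma rderiv_id : rderiv (fun s : R => s%:C) (fun _ => 1).
Proof.
move=> t t0 e e0; exists 1; split => // h h0 _.
by rewrite -rmorphB /= addrAC subrr add0r -rmorphM mulVf ?gt_eqF // subrr cnorm0.
Qed.

Lemma rderiv_const (c : C) : rderiv (fun _ : R => c) (fun _ => 0).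
Proof. by move=> t t0 e e0; exists 1; split => // h h0 _; rewrite !subrr mulr0 subrr cnorm0. Qed.


Lemma unif_diff (h k : R -> C) T : 0 <= T -> ccont_nonneg h -> ccont_nonneg k ->
  rderiv h k -> forall e : R, 0 < e -> exists d : R, 0 < d /\
  forall s eta, 0 <= s -> s + eta <= T -> 0 < eta -> eta < d ->
    cnorm (h (s + eta) - h s - eta%:C * k s) <= e * eta.
Proof.
move=> T0 ch ck dh e e0.
have [d [d0 Hd]] := uc ck T0 e0.
exists d; split => // s eta s0 sT eta0 etad.
pose f := fun r : R => (- k s) * r%:C + h r.
pose g := fun r : R => (- k s) * 1 + k r.
have cf : ccont_nonneg f by apply: ccont_lin; [exact: ccont_id | exact: ch].
have df : rderiv f g by apply: rderiv_lin; [exact: rderiv_id | exact: dh].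
have sT' : s <= T by move: sT eta0; lra.
have sle : s <= s + eta by rewrite lerDl ltW.
have Hg : forall r, s <= r -> r < s + eta -> cnorm (g r) <= e.
  move=> r sr rs; rewrite /g mulr1 addrC; apply: ltW; apply: Hd.
  - exact: le_trans s0 sr.
  - by move: rs sT; lra.
  - exact: s0.
  - exact: sT'.
  by rewrite ger0_norm ?subr_ge0 //; move: rs etad; lra.
have H := MVT cf df s0 sle (ltW e0) Hg.
move: H; rewrite /f (_ : s + eta - s = eta); last by rewrite addrC addKr.
rewrite (_ : - k s * (s + eta)%:C + h (s + eta) - (- k s * s%:C + h s) =
   h (s + eta) - h s - eta%:C * k s) // rmorphD /=; ring.
Qed.


Lemma frac_le (B x : R) : 0 <= B -> 0 <= x -> B * (x / (B + 1)) <= x.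
Proof. by move=> B0 x0; rewrite mulrA ler_pdivrMr ?ltr_wpDl //; nra. Qed.

Lemma conv_est (K h k F G : R -> C) :
  ccont_nonneg K -> ccont_nonneg h -> ccont_nonneg k -> rderiv h k ->
  (forall t, 0 <= t -> is_cint (fun s => K (t - s) * h s) t (F t)) ->
  (forall t, 0 <= t -> is_cint (fun s => K (t - s) * k s) t (G t)) ->
  forall T eps : R, 0 <= T -> 0 < eps -> exists del : R, 0 < del /\ del <= 1 /\
    forall t eta, 0 <= t -> t <= T -> 0 < eta -> eta < del ->
    cnorm (F (t + eta) - F t - eta%:C * (K t * h 0 + G t)) <= eps * eta.
Proof.
move=> cK ch ck dh HF HG T eps T0 eps0.
have T10 : 0 <= T + 1 by lra.
have [BK [BK0 HBK]] := bdd cK T10.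
have [Bh [Bh0 HBh]] := bdd ch T10.
have TBK0 : 0 <= T * BK by rewrite mulr_ge0.
have eps4 : 0 <= eps / 4 by rewrite divr_ge0 // ltW.
have e1 : 0 < eps / 4 / (Bh + 1) by rewrite !divr_gt0 // ltr_wpDl.
have e2 : 0 < eps / 4 / (BK + 1) by rewrite !divr_gt0 // ltr_wpDl.
have e3 : 0 < eps / 4 / (T * BK + 1) by rewrite !divr_gt0 // ltr_wpDl.
have [dK [dK0 HdK]] := uc cK T10 e1.
have [dh' [dh0 Hdh]] := uc ch T10 e2.
have [dk [dk0 Hdk]] := unif_diff T10 ch ck dh e3.
exists (Num.min 1 (Num.min dK (Num.min dh' dk))).
split; first by rewrite !lt_min ltr01 dK0 dh0 dk0.
split; first by rewrite ge_min lexx.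
move=> t eta t0 tT eta0; rewrite !lt_min => /andP[eta1 /andP[etaK /andP[etah etak]]].
have estB : forall u, 0 <= u -> u <= eta ->
    cnorm (K (t + eta - u) * h u - K t * h 0) <= eps / 2.
  move=> u u0 ue.
  rewrite (_ : K (t + eta - u) * h u - K t * h 0 =
    K (t + eta - u) * (h u - h 0) + (K (t + eta - u) - K t) * h 0); last by ring.
  apply: le_trans (cnormD _ _) _; rewrite !cnormM.
  have a1 : cnorm (K (t + eta - u)) <= BK by apply: HBK; move: ue eta1 tT t0; lra.
  have a2 : cnorm (h u - h 0) <= eps / 4 / (BK + 1).
    apply: ltW; apply: Hdh => //; first by move: ue eta1 tT; lra.
    by rewrite subr0 ger0_norm //; move: ue etah; lra.
  have a3 : cnorm (K (t + eta - u) - K t) <= eps / 4 / (Bh + 1).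
    apply: ltW; apply: HdK; first by move: ue eta0 t0; lra.
    - by move: ue eta1 tT t0; lra.
    - exact: t0.
    - by move: tT; lra.
    rewrite (_ : t + eta - u - t = eta - u); last by ring.
    by rewrite ger0_norm; move: ue etaK u0; lra.
  have a4 : cnorm (h 0) <= Bh by apply: HBh => //; exact: lexx.
  have b1 := ler_pM (cnorm_ge0 _) (cnorm_ge0 _) a1 a2.
  have b2 := ler_pM (cnorm_ge0 _) (cnorm_ge0 _) a3 a4.
  have c1 := frac_le BK0 eps4.
  have c2 := frac_le Bh0 eps4; rewrite mulrC in c2.
  move: b1 b2 c1 c2; lra.
have estA : forall s, 0 <= s -> s <= t ->
    cnorm (K (t - s) * (h (eta + s) - h s - eta%:C * k s)) <=
    BK * (eps / 4 / (T * BK + 1) * eta).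
  move=> s s0 st; rewrite cnormM; apply: ler_pM; rewrite ?cnorm_ge0 //.
    by apply: HBK; move: st tT; lra.
  rewrite (addrC eta s); apply: Hdk => //; move: st tT eta1; lra.
apply: le_of_forall_lt => r r0.
set rho := r / 3.
have rho0 : 0 < rho by rewrite divr_gt0.
have teta0 : 0 <= t + eta by move: t0 eta0; lra.
have [d1 [d10 H1]] := HF (t + eta) teta0 _ rho0.
have [d2 [d20 H2]] := HF t t0 _ rho0.
have [d3 [d30 H3]] := HG t t0 _ rho0.
set dd := Num.min d1 (Num.min d2 d3).
have dd0 : 0 < dd by rewrite !lt_min d10 d20 d30.
have dd1 : dd <= d1 by rewrite ge_min lexx.
have dd2 : dd <= d2 by rewrite !ge_min lexx orbT.
have dd3 : dd <= d3 by rewrite !ge_min lexx !orbT.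
have [n [n0 Hn]] := exists_upart t0 dd0.
have [m [m0 Hm]] := exists_upart (ltW eta0) dd0.
have P := upart_tp t0 n0 Hn.
have Q := upart_tp (ltW eta0) m0 Hm.
have PQ := tp_cat Q P; rewrite (addrC eta t) in PQ.
have hQm : upart m eta m = eta by case: Q.
have hQ0 : upart m eta 0 = 0 by case: Q.
have hP0 : upart n t 0 = 0 by case: P.
have h1 := H1 _ _ _ (tp_mesh PQ dd1).
have h2 := H2 _ _ _ (tp_mesh P dd2).
have h3 := H3 _ _ _ (tp_mesh P dd3).
change (is_true (cnorm (Rsum (m + n) (pcat m eta (upart m eta) (upart n t))
   (xcat m eta (upart m eta) (upart n t)) (fun s => K (t + eta - s) * h s) - F (t + eta))
   < rho)) in h1.
change (is_true (cnorm (Rsum n (upart n t) (upart n t) (fun s => K (t - s) * h s) - F t) < rho)) in h2.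
change (is_true (cnorm (Rsum n (upart n t) (upart n t) (fun s => K (t - s) * k s) - G t) < rho)) in h3.
rewrite Rsum_cat // in h1.
set SQ := Rsum m _ _ _ in h1.
set SP' := Rsum n _ _ (fun s => K (t + eta - (eta + s)) * h (eta + s)) in h1.
set S := Rsum n _ _ (fun s => K (t - s) * h s) in h2.
set SG := Rsum n _ _ (fun s => K (t - s) * k s) in h3.
have B1 : SQ - eta%:C * (K t * h 0) =
    Rsum m (upart m eta) (upart m eta) (fun u => K (t + eta - u) * h u - K t * h 0).
  by rewrite Rsum_B Rsum_const hQm hQ0 subr0.
have B2 : SP' - S - eta%:C * SG =
    Rsum n (upart n t) (upart n t) (fun s => K (t - s) * (h (eta + s) - h s - eta%:C * k s)).
  rewrite (@Rsum_ext R n (upart n t) (upart n t) _ (fun s => (K (t - s) * h (eta + s) - K (t - s) * h s) -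
                                   eta%:C * (K (t - s) * k s))); last by move=> s; ring.
  rewrite !Rsum_B Rsum_Z; congr (_ - _ - _); apply: Rsum_ext => s.
  by rewrite (_ : t + eta - (eta + s) = t - s) //; ring.
have bd1 := Rsum_bound Q estB; rewrite -B1 in bd1.
have bd2 := Rsum_bound P estA; rewrite -B2 in bd2.
rewrite (_ : F (t + eta) - F t - eta%:C * (K t * h 0 + G t) =
   - (SQ + SP' - F (t + eta)) + (S - F t) + eta%:C * (SG - G t) +
   (SQ - eta%:C * (K t * h 0)) + (SP' - S - eta%:C * SG)); last by ring.
apply: le_trans (cnormD _ _) _.
have q1 := cnormD (- (SQ + SP' - F (t + eta)) + (S - F t) + eta%:C * (SG - G t))
   (SQ - eta%:C * (K t * h 0)).
have q2 := cnormD (- (SQ + SP' - F (t + eta)) + (S - F t)) (eta%:C * (SG - G t)).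
have q3 := cnormD (- (SQ + SP' - F (t + eta))) (S - F t).
rewrite cnormN in q3.
rewrite cnormM cnormR ger0_norm ?(ltW eta0) // in q2.
have q4 : eta * cnorm (SG - G t) <= rho.
  apply: le_trans (_ : 1 * cnorm (SG - G t) <= _); last by rewrite mul1r ltW.
  by apply: ler_wpM2r; [exact: cnorm_ge0 | exact: ltW].
have q5 : t * (BK * (eps / 4 / (T * BK + 1) * eta)) <= eps / 4 * eta.
  have c3 := frac_le TBK0 eps4.
  have : 0 <= BK * (eps / 4 / (T * BK + 1) * eta).
    by rewrite mulr_ge0 // mulr_ge0 // ?ltW // divr_ge0 // ltW // ltr_wpDl.
  move=> X0; apply: le_trans (ler_wpM2r X0 tT) _.
  set X := eps / 4 / (T * BK + 1) in c3 *.
  rewrite (_ : T * (BK * (X * eta)) = T * BK * X * eta); last by ring.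
  by apply: ler_wpM2r => //; exact: ltW.
move: q1 q2 q3 q4 q5 bd1 bd2 h1 h2; rewrite /rho.
rewrite (_ : eta * (eps / 2) = (eps * eta) / 2); last by ring.
rewrite (_ : eps / 4 * eta = (eps * eta) / 4); last by ring.
have W0 : 0 <= eps * eta by rewrite mulr_ge0 // ltW.
move: W0; move: (t * _) (eta * cnorm _) (eps * eta) => Z Y W.
lra.
Qed.


Lemma conv_rderiv (K h k F G : R -> C) :
  ccont_nonneg K -> ccont_nonneg h -> ccont_nonneg k -> rderiv h k ->
  (forall t, 0 <= t -> is_cint (fun s => K (t - s) * h s) t (F t)) ->
  (forall t, 0 <= t -> is_cint (fun s => K (t - s) * k s) t (G t)) ->
  rderiv F (fun t => K t * h 0 + G t).
Proof.
move=> cK ch ck dh HF HG t t0 e e0.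
have e2 : 0 < e / 2 by rewrite divr_gt0.
have [del [del0 [_ Hd]]] := conv_est cK ch ck dh HF HG t0 e2.
exists del; split => // eta eta0 etad.
have := Hd t eta t0 (lexx t) eta0 etad.
set D := K t * h 0 + G t.
rewrite (_ : (eta^-1)%:C * (F (t + eta) - F t) - D =
   (eta^-1)%:C * (F (t + eta) - F t - eta%:C * D)); last first.
  by rewrite [RHS]mulrBr [in RHS]mulrA -rmorphM mulVf ?gt_eqF // mul1r.
rewrite cnormM cnormR ger0_norm ?invr_ge0 ?(ltW eta0) // => H.
apply: le_lt_trans (_ : eta^-1 * (e / 2 * eta) < e).
  by apply: ler_wpM2l => //; rewrite invr_ge0 ltW.
rewrite mulrCA mulVf ?gt_eqF // mulr1; lra.
Qed.

Lemma conv_cont (K h k F G : R -> C) :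
  ccont_nonneg K -> ccont_nonneg h -> ccont_nonneg k -> rderiv h k ->
  (forall t, 0 <= t -> is_cint (fun s => K (t - s) * h s) t (F t)) ->
  (forall t, 0 <= t -> is_cint (fun s => K (t - s) * k s) t (G t)) ->
  ccont_nonneg F.
Proof.
move=> cK ch ck dh HF HG t t0 e e0.
have [BK [BK0 HBK]] := bdd cK t0.
have [Bh [Bh0 HBh]] := bdd ch t0.
have [Bk [Bk0 HBk]] := bdd ck t0.
set BD := BK * Bh + t * (BK * Bk).
have BD0 : 0 <= BD by rewrite addr_ge0 ?mulr_ge0.
have HD : forall s, 0 <= s -> s <= t -> cnorm (K s * h 0 + G s) <= BD.
  move=> s s0 st; apply: le_trans (cnormD _ _) _; apply: lerD.
    rewrite cnormM; apply: ler_pM; rewrite ?cnorm_ge0 //; first exact: HBK.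
    by apply: HBh; rewrite ?lexx.
  apply: le_trans (_ : s * (BK * Bk) <= _); last by rewrite ler_wpM2r ?mulr_ge0.
  apply: cint_bound s0 (HG s s0) _ => u u0 us.
  rewrite cnormM; apply: ler_pM; rewrite ?cnorm_ge0 //.
    by apply: HBK; move: u0 us st; lra.
  by apply: HBk; move: us st; lra.
have [del [del0 [del1 Hd]]] := conv_est cK ch ck dh HF HG t0 ltr01.
have key : forall a eta, 0 <= a -> a <= t -> 0 < eta -> eta < del ->
    cnorm (F (a + eta) - F a) <= eta * (1 + BD).
  move=> a eta a0 at' eta0 etad.
  have H := Hd a eta a0 at' eta0 etad.
  rewrite (_ : F (a + eta) - F a = (F (a + eta) - F a - eta%:C * (K a * h 0 + G a)) +
     eta%:C * (K a * h 0 + G a)); last by rewrite subrK.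
  apply: le_trans (cnormD _ _) _; rewrite cnormM cnormR ger0_norm ?(ltW eta0) //.
  have := HD a a0 at'; have := ler_wpM2l (ltW eta0) (HD a a0 at').
  move: H; rewrite mul1r; lra.
have BD2 : 0 < BD + 2 by lra.
exists (Num.min del (e / (BD + 2))); split; first by rewrite lt_min del0 divr_gt0.
move=> s s0; rewrite lt_min => /andP[sd se].
have fin : forall eta, 0 <= eta -> eta < e / (BD + 2) -> eta * (1 + BD) < e.
  move=> eta eta0 etae; move: etae; rewrite ltr_pdivlMr // => H.
  apply: le_lt_trans H; rewrite ler_wpM2l //; lra.
have [st|st|st] := ltgtP s t.
- have ts0 : 0 < t - s by rewrite subr_gt0.
  have := key s (t - s) s0 (ltW st) ts0.
  rewrite (addrC s) subrK cnormB => H.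
  have : `|s - t| = t - s by rewrite ltr0_norm ?subr_lt0 // opprB.
  move=> E; rewrite E in sd se.
  by apply: le_lt_trans (H sd) (fin _ _ se); rewrite subr_ge0 ltW.
- have ts0 : 0 < s - t by rewrite subr_gt0.
  have := key t (s - t) t0 (lexx t) ts0.
  rewrite (addrC t) subrK => H.
  have : `|s - t| = s - t by rewrite gtr0_norm ?subr_gt0.
  move=> E; rewrite E in sd se.
  by apply: le_lt_trans (H sd) (fin _ _ se); rewrite subr_ge0 ltW.
- by rewrite st subrr cnorm0.
Qed.

End Conv.


Section Final.
Variable R : realType.
Local Notation C := R[i].
Variable V : lmodType C.
Variable ip : V -> V -> C.
Hypothesis Hh : is_hilbert ip.
Local Notation hn := (hnorm ip).
Variable U : R -> V -> V.
Hypothesis HU : is_C0_semigroup ip U.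

Lemma vint_cint (g : R -> V) t J z : is_vint ip g t J ->
  is_cint (fun s => ip (g s) z) t (ip J z).
Proof.
move=> HJ e e0.
have hz := hn_ge0 ip z.
have e' : 0 < e / (hn z + 1) by rewrite divr_gt0 // ltr_wpDl.
have [d [d0 Hd]] := HJ _ e'.
exists d; split => // n p xi P.
have := Hd n p xi P.
set S := \sum_(i < n) _ => H.
have -> : \sum_(i < n) ((p i.+1 - p i)%:C * ip (g (xi i)) z) = ip S z.
  by rewrite /S (ip_suml Hh); apply: eq_bigr => i _; rewrite (ipZl Hh).
rewrite -(ipBl Hh); apply: le_lt_trans (CS Hh _ _) _.
apply: le_lt_trans (_ : e / (hn z + 1) * hn z < e).
  by apply: ler_wpM2r => //; apply: ltW.
rewrite mulrAC ltr_pdivrMr ?ltr_wpDl //; nra.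
Qed.

Lemma ip_ccont x v : ccont_nonneg (fun s => ip (U s x) v).
Proof.
move=> t t0 e e0.
have hv := hn_ge0 ip v.
have e' : 0 < e / (hn v + 1) by rewrite divr_gt0 // ltr_wpDl.
have [d [d0 Hd]] := U_cont Hh HU x t0 e'.
exists d; split => // s s0 st.
rewrite -(ipBl Hh); apply: le_lt_trans (CS Hh _ _) _.
apply: le_lt_trans (_ : e / (hn v + 1) * hn v < e).
  by apply: ler_wpM2r => //; apply: ltW; apply: Hd.
rewrite mulrAC ltr_pdivrMr ?ltr_wpDl //; nra.
Qed.

Lemma ip_rderiv x y v : is_gen ip U x y ->
  rderiv (fun s => ip (U s x) v) (fun s => ip (U s y) v).
Proof.
move=> G t t0 e e0.
have hv := hn_ge0 ip v.
have e' : 0 < e / (hn v + 1) by rewrite divr_gt0 // ltr_wpDl.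
have [d [d0 Hd]] := gen_shift HU G t0 e'.
exists d; split => // h h0 hd.
have h0' := ltW h0.
rewrite (addrC t) (U_semi HU) //.
rewrite -(ipBl Hh) -(ipZl Hh) -(ipBl Hh).
apply: le_lt_trans (CS Hh _ _) _.
apply: le_lt_trans (_ : e / (hn v + 1) * hn v < e).
  by apply: ler_wpM2r => //; apply: ltW; apply: Hd.
rewrite mulrAC ltr_pdivrMr ?ltr_wpDl //; nra.
Qed.

End Final.

Lemma rderiv_ext (R : realType) (f g g' : R -> R[i]) : rderiv f g ->
  (forall t, 0 <= t -> g t = g' t) -> rderiv f g'.
Proof.
move=> d E t t0 e e0; have [dd [dd0 H]] := d t t0 e e0.
by exists dd; split => // h h0 hd; rewrite -E //; apply: H.
Qed.

Lemma cint_zero (R : realType) (t : R) : is_cint (fun _ => 0 : R[i]) t 0.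
Proof.
move=> e e0; exists 1; split => // n p xi P.
by rewrite big1 ?subrr ?cnorm0 // => i _; rewrite mulr0.
Qed.

Lemma cint_scale (R : realType) (f : R -> R[i]) t I (a : R[i]) :
  is_cint f t I -> is_cint (fun s => a * f s) t (a * I).
Proof.
move=> H; have := cint_lin a H (cint_zero t); rewrite addr0.
by apply: cint_ext => s; rewrite addr0.
Qed.

Lemma cint_at0 (R : realType) (f : R -> R[i]) I : is_cint f 0 I -> I = 0.
Proof.
move=> H.
have hb : forall s : R, 0 <= s -> s <= 0 -> cnorm (f s) <= cnorm (f 0).
  move=> s s0 s1; have -> : s = 0 by apply/eqP; rewrite eq_le s1 s0.
  exact: lexx.
have := cint_bound (lexx 0) H hb; rewrite mul0r => h.
by apply: cnorm_eq0; apply/eqP; rewrite eq_le h cnorm_ge0.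
Qed.

Lemma ccont_ext (R : realType) (f g : R -> R[i]) : ccont_nonneg f -> (forall s, f s = g s) ->
  ccont_nonneg g.
Proof. by move=> H E; rewrite (_ : g = f) //; apply: funext => s; rewrite E. Qed.

Unset Implicit Arguments.
Set Strict Implicit.

Theorem corollary2 (R : realType) (V : lmodType R[i]) (ip : V -> V -> R[i])
  (U : R -> V -> V) (z Lz Ldz : V) (K : R -> R[i]) (eta : R -> V) :
  is_hilbert ip ->
  is_C0_semigroup ip U ->
  is_gen ip U z Lz ->          (* z \in D(L),        L z        = Lz  *)
  is_adj_gen ip U z Ldz ->     (* z \in D(L^dagger), L^dagger z = Ldz *)
  z != 0 ->
  ccont_nonneg K ->
  (forall t, 0 <= t -> exists I : R[i],
      is_cint (fun s => K (t - s) * ip (U s z) (projQ ip z Ldz) / ip z z) t I /\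
      K t = ip (U t (projQ ip z Lz)) (projQ ip z Ldz) / ip z z - I) ->
  (forall t, 0 <= t -> exists J : V,
      is_vint ip (fun s => K (t - s) *: U s z) t J /\
      eta t = U t (projQ ip z Lz) - J) ->
  forall t, 0 <= t -> ip (eta t) z = 0.
Proof.
move=> Hh HU Hgen Hadj z0 cK HK Heta t t0.
set w := Ldz.
set N := ip z z.
have N0 : N != 0.
  by apply: contra z0 => /eqP h; apply/eqP; case: Hh => _ _ _ H _; exact: H.
have NE : conjc N = N by rewrite /N (ip_self Hh) conjc_real.
set g := ip Lz z / N.
have adj0 : ip Lz z = ip z w := Hadj z Lz Hgen.
have adjt : forall s, 0 <= s -> ip (U s Lz) z = ip (U s z) w.
  by move=> s s0; apply: Hadj; have := gen_shift HU Hgen s0; apply.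
set h := fun s => ip (U s z) z.
set k := fun s => ip (U s z) w.
set p := fun s => ip (U s Lz) w.
set q := projQ ip z w.
have ipq : forall v, ip v q = ip v w - g * ip v z.
  move=> v; rewrite /q /projQ /projP (ipBr Hh) (ipZr Hh); congr (_ - _ * _).
  by rewrite /g adj0 rmorphM /= conjc_inv -/N NE -(ipC Hh w z).
set QL := projQ ip z Lz.
have QLE : QL = Lz - g *: z by [].
set c := fun s => k s - g * h s.
have cE : forall s, 0 <= s -> ip (U s QL) z = c s.
  by move=> s s0; rewrite QLE (UB HU) // (UZ HU) // (ipBl Hh) (ipZl Hh) adjt.
set A := fun s => ip (U s QL) q.
have AE : forall s, 0 <= s -> A s + g * c s = p s - g * k s.
  move=> s s0; rewrite /A ipq QLE (UB HU) // (UZ HU) // !(ipBl Hh) !(ipZl Hh) adjt //.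
  by rewrite /c /k /h /p; ring.
set F := fun s => ip (U s QL) z - ip (eta s) z.
have HF : forall s, 0 <= s -> is_cint (fun u => K (s - u) * h u) s (F s).
  move=> s s0; have [J [HJ EJ]] := Heta s s0.
  have -> : F s = ip J z by rewrite /F EJ (ipBl Hh) -subKK.
  by apply: (cint_ext _ (vint_cint Hh z HJ)) => u; rewrite (ipZl Hh).
set I := fun s => A s / N - K s.
have HI : forall s, 0 <= s -> is_cint (fun u => K (s - u) * ip (U u z) q / N) s (I s).
  move=> s s0; have [I' [HI' EI']] := HK s s0.
  by have -> : I s = I' by rewrite /I /A EI' -subKK.
set Gf := fun s => N * I s + g * F s.
have HG : forall s, 0 <= s -> is_cint (fun u => K (s - u) * k u) s (Gf s).
  move=> s s0; have := cint_lin N (HI s s0) (cint_scale g (HF s s0)).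
  by apply: cint_ext => u; rewrite ipq /k /h; field.
have ch : ccont_nonneg h := ip_ccont Hh HU z z.
have ck : ccont_nonneg k := ip_ccont Hh HU z w.
have dh : rderiv h k.
  by apply: rderiv_ext (ip_rderiv Hh HU z Hgen) _ => s s0; rewrite adjt.
have dk : rderiv k p := ip_rderiv Hh HU w Hgen.
have dF := conv_rderiv cK ch ck dh HF HG.
have cF := conv_cont cK ch ck dh HF HG.
set e := fun s => c s - F s.
have ce : ccont_nonneg e.
  apply: ccont_ext (ccont_lin (-1) cF (ccont_lin (- g) ch ck)) _ => s.
  by rewrite /e /c; ring.
have h0E : h 0 = N by rewrite /h (U_0 HU).
have de : rderiv e (fun s => g * e s).
  have d1 := rderiv_lin (-1) dF (rderiv_lin (- g) dh dk).
  have -> : e = (fun s => -1 * F s + (- g * h s + k s)).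
    by apply: funext => s; rewrite /e /c; ring.
  apply: rderiv_ext d1 _ => s s0 /=.
  have pE : p s = A s + g * c s + g * k s by rewrite AE // subrK.
  by rewrite pE h0E /Gf /I /e /c; field.
have e0 : e 0 = 0.
  rewrite /e /c /k h0E (U_0 HU) -adj0 /g divfK // subrr.
  by rewrite (cint_at0 (HF 0 (lexx 0))) subr0.
have := ode0 ce de e0 t0.
by rewrite /e -cE // /F -subKK.
Qed.
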